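(* Let $F\in\mathcal{Q}$ and define $\lambda=(\lambda_i)_{i\in\mathbb{Z}_{\ge0}}$ by $\lambda_i=2^{-F(i)}$. Let $k\in\mathbb{Z}_{\ge0}$, let $P_0,\dots,P_k$ be subsets of $\mathbb{Q}_{\ge0}$, and let $S\subseteq\mathbb{Q}_{\ge0}$. Assume there exist $a,b_0,\dots,b_k\in[0,\infty)$ such that (I) $a<b_i$ for all $i\in\{0,\dots,k\}$; (II) $b_i\neq b_j$ for $i\neq j$; (III) $S\cap P_i=[a,b_i)\cap\mathbb{Q}_{\ge0}$ for all $i\in\{0,\dots,k\}$. Then the $k+2$ real numbers $\langle\lambda,P_0\rangle,\dots,\langle\lambda,P_k\rangle,1$ are linearly independent over $\mathbb{Q}$.
   Context: Fix a bijection $Q\colon\mathbb{Z}_{\ge0}\to\mathbb{Q}_{\ge0}$. For a summable sequence $\alpha=(a_i)_{i\in\mathbb{Z}_{\ge0}}$ of positive reals and $B\subseteq\mathbb{Q}_{\ge0}$, put $\langle\alpha,B\rangle=\sum_{i:\,Q(i)\in B}a_i$, with $\langle\alpha,\emptyset\rangle=0$. $\mathcal{Q}$ denotes the set of all strictly increasing maps $F\colon\mathbb{Z}_{\ge0}\to\mathbb{Z}_{\ge0}$ such that $\lim_{n\to\infty}(F(n+1)-F(n))=\infty$ and $\lim_{n\to\infty}\sum_{m=n+1}^{\infty}2^{F(n)-F(m)}=0$. *)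

(* Defs.v *)
From HB Require Import structures.
From mathcomp Require Import all_boot all_order all_algebra.
From mathcomp Require Import all_classical all_reals all_analysis.
Set Implicit Arguments. Unset Strict Implicit. Unset Printing Implicit Defensive.
Import Order.TTheory GRing.Theory Num.Theory numFieldNormedType.Exports.
Local Open Scope classical_set_scope.
Local Open Scope ring_scope.

Definition nonneg_rat_bij (Q : nat -> rat) : Prop :=
  [/\ forall i, 0 <= Q i, injective Q & forall q : rat, 0 <= q -> exists i, Q i = q].

Definition pairing (R : realType) (Q : nat -> rat) (alpha : nat -> R) (B : set rat) : R :=
  limn (series (fun i => if Q i \in B then alpha i else 0)).

Definition in_calQ (R : realType) (F : nat -> nat) : Prop :=
  [/\ (forall n m, (n < m)%N -> (F n < F m)%N),
      (forall M : nat, exists N : nat, forall n, (N <= n)%N -> (M <= F n.+1 - F n)%N)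
    & (fun n => limn (fun N => \sum_(n.+1 <= m < N)
                       (2 : R) ^ ((F n)%:Z - (F m)%:Z))) @ \oo --> (0 : R)].

Definition lambda_of (R : realType) (F : nat -> nat) : nat -> R :=
  fun i => (2 : R) ^- (F i).

(* Main.v *)
Require Import Defs.
From HB Require Import structures.
From mathcomp Require Import all_boot all_order all_algebra.
From mathcomp Require Import all_classical all_reals all_analysis.
From mathcomp Require Import ring lra zify.
Import Order.TTheory GRing.Theory Num.Theory numFieldNormedType.Exports.
Local Open Scope classical_set_scope.
Local Open Scope ring_scope.
Lemma pow2z (R : realType) (a b : nat) : (2:R) ^ (a%:Z - b%:Z) = 2^+a * 2^-b.
Proof. by rewrite expfzDr ?pnatr_eq0 // exprnN. Qed.

Lemma pow2B (R : realType) {a b : nat} : (a <= b)%N -> (2:R)^+a * 2^-b = 2^-(b - a).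
Proof. by move=> ab; rewrite exprB // ?unitfE ?pnatr_eq0 // invf_div. Qed.

Lemma pow2le (R : realType) (u v : nat) : (u <= v)%N -> (2:R)^-v <= 2^-u.
Proof.
move=> uv; rewrite lef_pV2 ?posrE ?exprn_gt0 //.
by apply: ler_weXn2l => //; rewrite ler1n.
Qed.

Lemma geo0 (R : realType) K : \sum_(0 <= m < K) (2:R)^-m = 2 - 2 * 2^-K.
Proof.
elim: K => [|K IH]; first by rewrite big_geq // expr0 invr1 mulr1 subrr.
rewrite big_nat_recr //= IH exprSr invfM.
have : (2:R)^+K != 0 by rewrite expf_neq0 // pnatr_eq0.
set x := (2:R)^+K => hx. field. by rewrite hx.
Qed.

Lemma geo (R : realType) a K : \sum_(a <= m < K) (2:R)^-m <= 2.
Proof.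
have [aK|Ka] := leqP a K; last first.
  by rewrite big_geq ?ler0n // ltnW.
apply: (@le_trans _ _ (\sum_(0 <= m < K) (2:R)^-m)).
  rewrite [leRHS](big_cat_nat (n:=a)) //= lerDr.
  by apply: sumr_ge0 => i _; rewrite invr_ge0 exprn_ge0.
rewrite geo0 lerBlDr lerDl; by rewrite mulr_ge0 // invr_ge0 exprn_ge0.
Qed.

Lemma Fgap (F : nat -> nat) (Finc : forall n m, (n < m)%N -> (F n < F m)%N) n j :
  (F n + j <= F (n + j))%N.
Proof.
elim: j => [|j IH]; first by rewrite !addn0.
have := Finc (n + j)%N (n + j).+1 (ltnSn _). rewrite !addnS. lia.
Qed.

Lemma Fmono (F : nat -> nat) (Finc : forall n m, (n < m)%N -> (F n < F m)%N) n m :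
  (n <= m)%N -> (F n <= F m)%N.
Proof.
rewrite leq_eqVlt => /orP[/eqP->//|/Finc]; exact: ltnW.
Qed.

Lemma natzR (R : realType) (k : nat) : ((k%:Z)%:~R : R) = k%:R.
Proof. by []. Qed.
Lemma key (R : realType) (F : nat -> nat)
  (Finc : forall n m, (n < m)%N -> (F n < F m)%N)
  (Ftail : (fun n => limn (fun N => \sum_(n.+1 <= m < N)
                       (2 : R) ^ ((F n)%:Z - (F m)%:Z))) @ \oo --> (0 : R))
  (d : nat -> int) (B : R) (hB : forall n, `|(d n)%:~R : R| <= B) (p : int)
  (sG : series (fun n => (d n)%:~R * (2:R)^-(F n)) @ \oo --> (p%:~R : R)) :
  exists N, forall n, (N < n)%N -> d n = 0.
Proof.
set G := (fun n => _) in sG.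
pose T (n N : nat) : R := \sum_(n.+1 <= m < N) (2 : R) ^ ((F n)%:Z - (F m)%:Z).
have B0 : 0 <= B by apply: le_trans (hB 0%N); exact: normr_ge0.
have Tterm m n : (n <= m)%N -> (2:R) ^ ((F n)%:Z - (F m)%:Z) = 2^-(F m - F n).
  by move=> nm; rewrite pow2z pow2B // (Fmono F Finc).
have Tterm2 n m : (n < m)%N -> (2:R) ^ ((F n)%:Z - (F m)%:Z) <= 2^+n * 2^-m.
  move=> nm; rewrite (Tterm m n (ltnW nm)) (pow2B R (ltnW nm) : (2:R)^+n * 2^-m = _); apply: pow2le.
  have := Fgap F Finc n (m - n); rewrite (subnKC (ltnW nm)) => h; lia.
have Tcvg n : cvgn (T n).
  apply: (@nondecreasing_is_cvgn R (T n)).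
    apply: (@nondecreasing_series _ _ xpredT) => m _ _.
    by rewrite pow2z mulr_ge0 // ?invr_ge0 exprn_ge0.
  exists (2^+n * 2) => _ [N _ <-].
  apply: (@le_trans _ _ (\sum_(n.+1 <= m < N) (2:R)^+n * 2^-m)).
    apply: ler_sum_nat => m /andP[hm _]; exact: Tterm2.
  by rewrite -mulr_sumr ler_wpM2l ?exprn_ge0 // geo.
have bound n : `|(2^+F n : R) * (p%:~R - series G n.+1)| <= B * limn (T n).
  have c1 : (fun K => `|(2^+F n : R) * (series G K - series G n.+1)|) @ \oo -->
             `|(2^+F n : R) * (p%:~R - series G n.+1)|.
    apply: cvg_norm; apply: cvgMl_tmp; apply: cvgB => //; exact: cvg_cst.
  have c2 : (fun K => B * T n K) @ \oo --> B * limn (T n).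
    by apply: cvgMl_tmp; exact: Tcvg.
  rewrite -(cvg_lim _ c1) // -(cvg_lim _ c2) //.
  apply: ler_lim; [exact: cvgP c1 | exact: cvgP c2 |].
  exists n.+1 => // K /= hK.
  rewrite sub_series_geq // mulr_sumr /T mulr_sumr.
  apply: le_trans (ler_norm_sum _ _ _) _.
  apply: ler_sum_nat => m /andP[hm _].
  have h0 : (0:R) <= 2^+F n * 2^-F m by rewrite mulr_ge0 // ?invr_ge0 exprn_ge0.
  rewrite /G pow2z mulrCA normrM (ger0_norm h0).
  by rewrite ler_wpM2r.
have zint n : exists z : int, (z%:~R : R) = 2^+F n * (p%:~R - series G n.+1).
  exists (p * (2 ^ F n)%N%:Z - \sum_(m < n.+1) d m * (2 ^ (F n - F m))%N%:Z).
  rewrite /series /= big_mkord mulrBr mulr_sumr rmorphB rmorphM rmorph_sum /=.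
  rewrite natzR natrX mulrC; congr (_ - _); apply: eq_bigr => m _.
  rewrite rmorphM /= natzR natrX /G mulrCA; congr (_ * _).
  rewrite exprB ?unitfE ?pnatr_eq0 //; apply: (Fmono F Finc); exact: ltn_ord m.
have [N0 ev] : exists N0, forall n, (N0 <= n)%N -> B * limn (T n) < 1.
  have c : (fun n => B * limn (T n)) @ \oo --> (0:R).
    rewrite -(mulr0 B); apply: cvgMl_tmp; exact: Ftail.
  have := @cvgr_dist_lt _ _ _ _ _ _ _ c _ (@ltr01 R); case=> N0 _ H; exists N0 => n hn.
  have := H n hn; rewrite /= sub0r normrN; apply: le_lt_trans; exact: ler_norm.
have tail0 n : (N0 <= n)%N -> series G n.+1 = p%:~R.
  move=> hn; have [z hz] := zint n.
  have hz1 : `|(z%:~R : R)| < 1 by rewrite hz; exact: le_lt_trans (bound n) (ev n hn).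
  have z0 : z = 0.
    move: hz1; rewrite -intr_norm (_ : 1 = (1:int)%:~R) // ltr_int; lia.
  move: hz; rewrite z0 mulr0z => /esym /eqP; rewrite mulf_eq0 expf_eq0 pnatr_eq0 andbF /=.
  by rewrite subr_eq0 => /eqP <-.
exists N0 => n hn.
have e := seriesSB G n.
rewrite tail0 in e; last by lia.
have hn' : n = n.-1.+1 by lia.
rewrite [in series G n]hn' tail0 in e; last by lia.
move: e; rewrite subrr /G => /esym /eqP; rewrite mulf_eq0 invr_eq0 expf_eq0 pnatr_eq0 andbF orbF.
by rewrite intr_eq0 => /eqP.
Qed.
Theorem proposition3p3 (R : realType) (Q : nat -> rat) (F : nat -> nat)
  (k : nat) (P : nat -> set rat) (S : set rat) :
  nonneg_rat_bij Q ->
  in_calQ R F ->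
  (forall i, (i <= k)%N -> P i `<=` [set q : rat | 0 <= q]) ->
  S `<=` [set q : rat | 0 <= q] ->
  (exists (a : R) (b : nat -> R),
      [/\ 0 <= a,
          (forall i, (i <= k)%N -> 0 <= b i),
          (forall i, (i <= k)%N -> a < b i),
          (forall i j, (i <= k)%N -> (j <= k)%N -> i != j -> b i != b j)
        & (forall i, (i <= k)%N ->
             S `&` P i = [set q : rat | 0 <= q /\ a <= ratr q /\ ratr q < b i])]) ->
  forall c : nat -> rat,
    \sum_(i < k.+1) ratr (c i) * pairing Q (lambda_of R F) (P i) + ratr (c k.+1) = 0 ->
    forall i, (i <= k.+1)%N -> c i = 0.
Proof.
move=> [_ Qinj Qsurj] [Finc _ Ftail] _ _ [a [b [a0 b0 ab bneq hSP]]] c Hsum.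
pose f (i : nat) (n : nat) : R := if Q n \in P i then lambda_of R F n else 0.
have fcvg i : cvgn (series (f i)).
  apply: nondecreasing_is_cvgn.
    apply: (@nondecreasing_series _ (f i) xpredT 0) => n _ _; rewrite /f.
    by case: ifP => _ //; rewrite /lambda_of invr_ge0 exprn_ge0.
  exists 2 => _ [N _ <-]; rewrite /series /=; apply: le_trans (geo R 0 N).
  apply: ler_sum_nat => n _; rewrite /f; case: ifP => _.
    by apply: pow2le; have := Fgap F Finc 0 n; rewrite add0n; lia.
  by rewrite invr_ge0 exprn_ge0.
pose M : int := \prod_(j < k.+2) denq (c j).
pose t (i : nat) : int := \prod_(j < k.+2 | val j != i) denq (c j).
pose e (i : nat) : int := numq (c i) * t i.
have Me i : (i <= k.+1)%N -> (e i)%:~R = M%:~R * c i :> rat.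
  move=> ik; have -> : M = denq (c i) * t i.
    rewrite /M (bigD1 (Ordinal (ik : (i < k.+2)%N))) //=; congr (_ * _).
  have hd : (denq (c i))%:~R * c i = (numq (c i))%:~R.
    by rewrite -[X in _ * X]divq_num_den mulrC divfK // intr_eq0 denq_neq0.
  by rewrite /e !rmorphM /= mulrAC hd mulrC.
have MR i : (i <= k.+1)%N -> ((e i)%:~R : R) = M%:~R * ratr (c i).
  by move=> h; rewrite -[LHS]ratr_int (Me i h) rmorphM /= ratr_int.
have M0 : (M%:~R : R) != 0.
  by rewrite intr_eq0 /M; apply/prodf_neq0 => j _; exact: denq_neq0.
pose d (n : nat) : int := \sum_(i < k.+1) (if Q n \in P i then e i else 0).
have hB n : `|(d n)%:~R : R| <= \sum_(i < k.+1) `|(e i)%:~R : R|.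
  rewrite /d rmorph_sum; apply: le_trans (ler_norm_sum _ _ _) _.
  by apply: ler_sum => i _; case: ifP => _ //; rewrite rmorph0 normr0 normr_ge0.
have H1 : \sum_(i < k.+1) ratr (c i) * pairing Q (lambda_of R F) (P i) = - ratr (c k.+1).
  by apply/eqP; rewrite -addr_eq0 Hsum.
have eqs : series (fun n => (d n)%:~R * (2:R)^-(F n)) =
    (fun N => \sum_(i < k.+1) (e i)%:~R * series (f i) N).
  apply/funext => N; rewrite /series /=.
  under eq_bigr do rewrite rmorph_sum mulr_suml.
  rewrite exchange_big /=; apply: eq_bigr => i _; rewrite mulr_sumr.
  apply: eq_bigr => n _; rewrite /f /lambda_of.
  by case: ifP => _; rewrite ?rmorph0 ?mulr0 ?mul0r.
have sG : series (fun n => (d n)%:~R * (2:R)^-(F n)) @ \oo --> ((- e k.+1)%:~R : R).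
  rewrite eqs.
  have -> : ((- e k.+1)%:~R : R) = \sum_(i < k.+1) (e i)%:~R * pairing Q (lambda_of R F) (P i).
    rewrite mulrNz (MR k.+1) // -[ratr (c k.+1)]opprK -H1 mulrN opprK mulr_sumr; apply: eq_bigr => i _.
    by rewrite (MR i (ltnW (ltn_ord i))) mulrA.
  apply: cvg_big; first exact: add_continuous.
  move=> i _; apply: cvgMl_tmp; exact: fcvg.
have [N0 HN] := key R F Finc Ftail d _ hB _ sG.
have call : forall i : 'I_k.+1, c i = 0.
  move=> i0; apply: contrapT => ci0.
  pose I := [pred i : 'I_k.+1 | c i != 0].
  have Ii0 : I i0 by rewrite inE; apply/eqP.
  have [j0 Ij0 j0max] := arg_maxP (fun i : 'I_k.+1 => b i) Ii0.
  have j0k : (j0 <= k)%N by rewrite -ltnS ltn_ord.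
  pose L := \big[Num.max/a]_(j < k.+1 | I j && (j != j0)) b j.
  have Lj0 : L < b j0.
    apply: bigmax_lt; first exact: ab.
    move=> j /andP[Ij jne]; have hj : b j <= b j0 := j0max j Ij.
    rewrite lt_neqAle hj andbT.
    apply: bneq => //; first by rewrite -ltnS ltn_ord.
  have aL : a <= L by exact: bigmax_ge_id.
  have bL j : (j <= k)%N -> c j != 0 -> j != j0 -> b j <= L.
    move=> jk cj jne; have jk' : (j < k.+1)%N by [].
    by apply: (le_bigmax_cond _ (j := Ordinal jk') (P := fun j => I j && (j != j0))); rewrite /= cj.
  pose m0 := \big[Num.min/b j0]_(n < N0.+1 | L < ratr (Q n)) ratr (Q n).
  have Lm0 : L < m0 by apply: lt_bigmin.
  have [q] := rat_in_itvoo Lm0; rewrite in_itv /= => /andP[Lq qm0].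
  have q0 : 0 <= q by rewrite -(ler0q R); apply: le_trans (ltW Lq); apply: le_trans aL.
  have [n Qn] := Qsurj q q0.
  have nN : (N0 < n)%N.
    rewrite ltnNge; apply/negP => nle; have nle' : (n < N0.+1)%N by [].
    have : m0 <= ratr (Q n).
      by apply: (bigmin_le_cond _ (j := Ordinal nle') (P := fun n : 'I_N0.+1 => L < ratr (Q n))); rewrite /= Qn.
    by rewrite Qn leNgt qm0.
  have qb : ratr q < b j0 by apply: lt_le_trans qm0 _; exact: bigmin_le_id.
  have inSP : (S `&` P j0) (Q n) by rewrite hSP // Qn; split => //; split => //; apply: le_trans (ltW Lq).
  have dn : d n = e j0.
    rewrite /d (bigD1 j0) //= (mem_set inSP.2) big1 ?addr0 // => j jne.
    case: ifP => // hj; have [cj0|cj0] := eqVneq (c j) 0; first by rewrite /e cj0 (_ : numq 0 = 0) // mul0r.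
    have jk : (j <= k)%N by rewrite -ltnS ltn_ord.
    have : (S `&` P j) (Q n) by split; [exact: inSP.1 | exact: set_mem hj].
    rewrite hSP // => -[_ [_ hlt]].
    have := bL j jk cj0 jne; rewrite -Qn in Lq.
    by move=> h; have := lt_trans (le_lt_trans h Lq) hlt; rewrite ltxx.
  have := HN n nN; rewrite dn => e0.
  have := MR j0 (leqW j0k); rewrite e0 mulr0z => /esym /eqP.
  by rewrite mulf_eq0 (negbTE M0) /= fmorph_eq0; move: Ij0; rewrite inE => /negbTE ->.
move=> i ik; have [ilt|ige] := ltnP i k.+1; first exact: (call (Ordinal ilt)).
have -> : i = k.+1 by apply/eqP; rewrite eqn_leq ik ige.
move: Hsum; rewrite big1 ?add0r => [/eqP|j _]; last by rewrite call rmorph0 mul0r.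
by rewrite fmorph_eq0 => /eqP.
Qed.
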